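(* Let $a\in\mathbb{R}$, $b\in(a,\infty)$, $f\in C^1([a,b],\mathbb{R})$, $p\in C([a,b],\mathbb{R})$ satisfy for all $x\in[a,b]$ that $f'(x)>0\le p(x)$ and $\int_a^b|p(y)|\,\mathrm{d}y>0$, assume that $f$ is strictly convex, let $g\colon[a,b]\to\mathbb{R}$ be affine linear, assume $\int_a^b(f(x)-g(x))p(x)\,\mathrm{d}x=0$, and let $\lambda=\max\{|f(x)-g(x)|\colon x\in\{a,b\},\ g(x)<f(x)\}$ (under these hypotheses this set is nonempty). Then $$\int_a^b(f(x)-g(x))^2p(x)\,\mathrm{d}x\le\lambda\Big[\lambda+\sup_{x\in[a,b]}f'(x)\Big]\Big[\sup_{x\in[a,b]}p(x)\Big](b-a).$$ *)

(* Defs.v *)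
From Stdlib Require Import Reals.
From Coquelicot Require Import Coquelicot.
Open Scope R_scope.

Definition cont_on (h : R -> R) (a b : R) : Prop :=
  forall x, a <= x <= b -> forall eps, 0 < eps -> exists delta, 0 < delta /\
    forall y, a <= y <= b -> Rabs (y - x) < delta -> Rabs (h y - h x) < eps.

Definition deriv_on (f df : R -> R) (a b : R) : Prop :=
  forall x, a <= x <= b -> forall eps, 0 < eps -> exists delta, 0 < delta /\
    forall y, a <= y <= b -> Rabs (y - x) < delta ->
      Rabs (f y - f x - df x * (y - x)) <= eps * Rabs (y - x).

Definition C1_on (f df : R -> R) (a b : R) : Prop :=
  deriv_on f df a b /\ cont_on df a b.

Definition strictly_convex_on (f : R -> R) (a b : R) : Prop :=
  forall x y t, a <= x <= b -> a <= y <= b -> x <> y -> 0 < t < 1 ->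
    f (t * x + (1 - t) * y) < t * f x + (1 - t) * f y.

Definition affine_on (g : R -> R) (a b : R) : Prop :=
  exists c d, forall x, a <= x <= b -> g x = c * x + d.

(* sup_{x in [a,b]} h x (as a real number; finite for continuous h). *)
Definition sup_on (h : R -> R) (a b : R) : R :=
  real (Lub_Rbar (fun y => exists x, a <= x <= b /\ y = h x)).

(* lambda = max { |f x - g x| : x in {a,b}, g x < f x }.
   The last branch (empty set) cannot occur under the hypotheses. *)
Definition lam (f g : R -> R) (a b : R) : R :=
  match Rlt_dec (g a) (f a), Rlt_dec (g b) (f b) with
  | left _, left _ => Rmax (Rabs (f a - g a)) (Rabs (f b - g b))
  | left _, right _ => Rabs (f a - g a)
  | right _, left _ => Rabs (f b - g b)
  | right _, right _ => 0
  end.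

(* Main.v *)
Require Import Defs.
From Stdlib Require Import Reals.
From Coquelicot Require Import Coquelicot.
From Stdlib Require Import Lra Psatz.
Open Scope R_scope.

Definition cl (a b x : R) := Rmax a (Rmin b x).

Lemma cl_in a b x : a <= b -> a <= cl a b x <= b.
Proof. intros; unfold cl, Rmax, Rmin; repeat destruct Rle_dec; lra. Qed.

Lemma cl_id a b x : a <= x <= b -> cl a b x = x.
Proof. intros; unfold cl, Rmax, Rmin; repeat destruct Rle_dec; lra. Qed.

Lemma cl_lip a b x y : a <= b -> Rabs (cl a b y - cl a b x) <= Rabs (y - x).
Proof. intros; unfold cl, Rmax, Rmin; repeat destruct Rle_dec;
  unfold Rabs; repeat destruct Rcase_abs; lra. Qed.

Lemma cont_cl k a b x : a <= b -> cont_on k a b -> continuous (fun y => k (cl a b y)) x.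
Proof.
  intros hab hk. apply continuity_pt_filterlim.
  unfold continuity_pt, continue_in, limit1_in, limit_in. simpl. unfold R_dist.
  intros eps he. destruct (hk (cl a b x) (cl_in a b x hab) eps he) as [d [hd H]].
  exists d; split; [exact hd|]. intros y [_ hy].
  apply H. apply cl_in; auto. eapply Rle_lt_trans; [apply cl_lip; auto| exact hy].
Qed.

Lemma deriv_cont f df a b : deriv_on f df a b -> cont_on f a b.
Proof.
  intros hd x hx eps he.
  destruct (hd x hx 1 Rlt_0_1) as [d [hdp H]].
  set (K := Rabs (df x) + 1).
  assert (hK : 0 < K) by (unfold K; pose proof (Rabs_pos (df x)); lra).
  exists (Rmin d (eps / K)); split.
  { apply Rmin_pos; auto. apply Rdiv_lt_0_compat; auto. }
  intros y hy hyx.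
  assert (h1 : Rabs (y - x) < d) by (eapply Rlt_le_trans; [exact hyx| apply Rmin_l]).
  assert (h2 : Rabs (y - x) < eps / K) by (eapply Rlt_le_trans; [exact hyx| apply Rmin_r]).
  specialize (H y hy h1).
  assert (h3 : Rabs (f y - f x) <= K * Rabs (y - x)).
  { replace (f y - f x) with ((f y - f x - df x * (y - x)) + df x * (y - x)) by ring.
    eapply Rle_trans; [apply Rabs_triang|]. rewrite Rabs_mult. unfold K. lra. }
  assert (K * Rabs (y - x) < eps).
  { apply (Rmult_lt_compat_l K) in h2; auto. 
    replace (K * (eps / K)) with eps in h2 by (field; lra). exact h2. }
  lra.
Qed.

Lemma affine_cont g a b : affine_on g a b -> cont_on g a b.
Proof.
  intros [c [d hg]] x hx eps he.
  exists (eps / (Rabs c + 1)); split.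
  { apply Rdiv_lt_0_compat; auto. pose proof (Rabs_pos c); lra. }
  intros y hy hyx. rewrite (hg y hy), (hg x hx).
  replace (c * y + d - (c * x + d)) with (c * (y - x)) by ring.
  rewrite Rabs_mult.
  pose proof (Rabs_pos c); pose proof (Rabs_pos (y - x)).
  apply (Rmult_lt_compat_l (Rabs c + 1)) in hyx; [|lra].
  replace ((Rabs c + 1) * (eps / (Rabs c + 1))) with eps in hyx by (field; lra).
  nra.
Qed.

Lemma sup_on_max k a b : a <= b -> cont_on k a b ->
  exists m, a <= m <= b /\ sup_on k a b = k m /\ forall x, a <= x <= b -> k x <= k m.
Proof.
  intros hab hk.
  destruct (continuity_ab_maj (fun y => k (cl a b y)) a b hab) as [m [Hm Hmin]].
  { intros c _. apply continuity_pt_filterlim. apply (cont_cl k a b c hab hk). }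
  exists m. rewrite cl_id in Hm by auto.
  assert (Hk : forall x, a <= x <= b -> k x <= k m).
  { intros x hx. specialize (Hm x hx). rewrite !cl_id in Hm; auto. }
  split; auto. split; auto.
  unfold sup_on. rewrite (is_lub_Rbar_unique _ (Finite (k m))); [reflexivity|].
  split.
  - intros y [x [hx ->]]. simpl. apply Hk; auto.
  - intros l hl. apply hl. exists m; split; auto.
Qed.

Lemma exR (k : R -> R) a b : a <= b -> (forall x, continuous (fun y => k (cl a b y)) x) -> ex_RInt k a b.
Proof.
  intros hab H. apply (ex_RInt_ext (fun y => k (cl a b y))).
  - intros x hx. rewrite Rmin_left, Rmax_right in hx by lra. rewrite cl_id; auto; lra.
  - apply (@ex_RInt_continuous R_CompleteNormedModule). intros; apply H.
Qed.

Lemma cmul (u v : R -> R) x : continuous u x -> continuous v x -> continuous (fun y => u y * v y) x.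
Proof. intros; apply (continuous_mult u v); auto. Qed.
Lemma cminus (u v : R -> R) x : continuous u x -> continuous v x -> continuous (fun y => u y - v y) x.
Proof. intros; apply (@continuous_minus R_UniformSpace R_AbsRing R_NormedModule u v); auto. Qed.
Lemma cplus (u v : R -> R) x : continuous u x -> continuous v x -> continuous (fun y => u y + v y) x.
Proof. intros; apply (@continuous_plus R_UniformSpace R_AbsRing R_NormedModule u v); auto. Qed.

Lemma piece (F : R -> R) u z v C1 C2 : u <= z <= v -> ex_RInt F u v ->
  (forall x, u < x < z -> F x <= C1) -> (forall x, z < x < v -> F x <= C2) ->
  RInt F u v <= C1 * (z - u) + C2 * (v - z).
Proof.
  intros hz hex H1 H2.
  assert (e1 : ex_RInt F u z) by (apply (ex_RInt_Chasles_1 F u z v); auto).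
  assert (e2 : ex_RInt F z v) by (apply (ex_RInt_Chasles_2 F u z v); auto).
  rewrite <- (RInt_Chasles F u z v e1 e2).
  assert (RInt F u z <= RInt (fun _ => C1) u z).
  { apply RInt_le; auto; try lra. apply ex_RInt_const. }
  assert (RInt F z v <= RInt (fun _ => C2) z v).
  { apply RInt_le; auto; try lra. apply ex_RInt_const. }
  rewrite ?RInt_const in *. unfold scal in *; simpl in *.
  unfold mult in *; simpl in *. unfold plus; simpl. lra.
Qed.

Lemma arith L M B P Lm : 0 <= L -> 0 < M -> 0 < B -> B <= L -> 0 <= P -> 0 <= Lm ->
  L * (L + M) * P * (Lm * (B / (B + M))) <= L ^ 2 * P * Lm.
Proof.
  intros. assert (K1 : L * (L + M) * (B / (B + M)) <= L * L).
  { apply (Rmult_le_reg_r (B + M)); [lra|].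
    replace (L * (L + M) * (B / (B + M)) * (B + M)) with (L * (L + M) * B) by (field; lra).
    assert (0 <= L * M * (L - B)) by (apply Rmult_le_pos; [apply Rmult_le_pos|]; lra).
    nra. }
  assert (K2 : 0 <= P * Lm) by nra.
  replace (L * (L + M) * P * (Lm * (B / (B + M)))) with ((L * (L + M) * (B / (B + M))) * (P * Lm)) by ring.
  replace (L ^ 2 * P * Lm) with ((L * L) * (P * Lm)) by ring.
  apply Rmult_le_compat_r; auto.
Qed.

Lemma bnd hx px L M P : hx <= L -> 0 <= hx + M -> 0 <= px <= P -> 0 <= L -> 0 < M ->
  hx * (hx + M) * px <= L * (L + M) * P.
Proof.
  intros. destruct (Rle_dec hx 0).
  - assert (hx * (hx + M) <= 0) by nra. assert (0 <= L * (L + M) * P) by (apply Rmult_le_pos; nra). nra.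
  - assert (hx * (hx + M) <= L * (L + M)) by nra.
    assert (0 <= hx * (hx + M)) by nra. nra.
Qed.

Lemma neg hx px M : hx <= 0 -> 0 <= hx + M -> 0 <= px -> hx * (hx + M) * px <= 0.
Proof. intros. assert (hx * (hx + M) <= 0) by nra. nra. Qed.

Theorem lemma3p6 (a b : R) (f df p g : R -> R)
  (hab : a < b)
  (hf : C1_on f df a b)
  (hp : cont_on p a b)
  (hdf : forall x, a <= x <= b -> 0 < df x)
  (hp0 : forall x, a <= x <= b -> 0 <= p x)
  (hpint : 0 < RInt (fun y => Rabs (p y)) a b)
  (hconv : strictly_convex_on f a b)
  (hg : affine_on g a b)
  (horth : RInt (fun x => (f x - g x) * p x) a b = 0) :
  RInt (fun x => (f x - g x) ^ 2 * p x) a b <=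
    lam f g a b * (lam f g a b + sup_on df a b) * sup_on p a b * (b - a).
Proof.
  destruct hf as [hd hdc].
  assert (hab' : a <= b) by lra.
  pose proof (deriv_cont f df a b hd) as hfc.
  pose proof (affine_cont g a b hg) as hgc.
  destruct hg as [c [d hg']].
  assert (hcv : forall x y t, a <= x <= b -> a <= y <= b -> 0 <= t <= 1 ->
    f (t * x + (1 - t) * y) - g (t * x + (1 - t) * y) <= t * (f x - g x) + (1 - t) * (f y - g y)).
  { intros x y t hx hy ht.
    assert (hin : a <= t * x + (1 - t) * y <= b) by nra.
    rewrite (hg' _ hin), (hg' _ hx), (hg' _ hy).
    destruct (Req_dec x y) as [<-|hxy].
    { replace (t * x + (1 - t) * x) with x by ring. nra. }
    destruct (Req_dec t 0) as [->|ht0].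
    { replace (0 * x + (1 - 0) * y) with y by ring. lra. }
    destruct (Req_dec t 1) as [->|ht1].
    { replace (1 * x + (1 - 1) * y) with x by ring. lra. }
    assert (f (t * x + (1 - t) * y) < t * f x + (1 - t) * f y) by (apply hconv; auto; lra).
    nra. }
  assert (hch : forall u v x, a <= u <= b -> a <= v <= b -> u < v -> u <= x <= v ->
    f x - g x <= (f u - g u) + ((f v - g v) - (f u - g u)) * ((x - u) / (v - u))).
  { intros u v x hu hv huv hx.
    set (t := (x - u) / (v - u)).
    assert (ht : 0 <= t <= 1).
    { unfold t; split.
      - apply Rdiv_le_0_compat; lra.
      - apply (Rmult_le_reg_r (v - u)); [lra|]. unfold Rdiv. rewrite Rmult_assoc, Rinv_l; lra. }
    assert (hx' : x = t * v + (1 - t) * u) by (unfold t; field; lra).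
    pose proof (hcv v u t hv hu ht) as H. rewrite <- hx' in H. lra. }
  assert (hhc : forall x, continuous (fun y => f (cl a b y) - g (cl a b y)) x).
  { intros x. apply cminus; apply cont_cl; auto. }
  assert (hpc : forall x, continuous (fun y => p (cl a b y)) x).
  { intros x. apply cont_cl; auto. }
  destruct (continuity_ab_min (fun y => f (cl a b y) - g (cl a b y)) a b hab') as [x0 [Hmin hx0]].
  { intros y _. apply continuity_pt_filterlim. apply hhc. }
  rewrite !(cl_id a b x0 hx0) in Hmin.
  assert (hmin : forall x, a <= x <= b -> f x0 - g x0 <= f x - g x).
  { intros x hx. specialize (Hmin x hx). rewrite !(cl_id a b x hx) in Hmin. exact Hmin. }
  clear Hmin.
  destruct (sup_on_max p a b hab' hp) as [mP [hmP [eP hP]]].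
  destruct (sup_on_max df a b hab' hdc) as [mF [hmF [eF _]]].
  rewrite eP, eF.
  set (P := p mP). set (F := df mF).
  assert (hF : 0 < F) by (apply hdf; auto).
  assert (hP0 : 0 <= P) by (apply hp0; auto).
  set (L := Rmax 0 (Rmax (f a - g a) (f b - g b))).
  assert (hL0 : 0 <= L) by apply Rmax_l.
  assert (hLa : f a - g a <= L) by (unfold L; eapply Rle_trans; [apply Rmax_l| apply Rmax_r]).
  assert (hLb : f b - g b <= L) by (unfold L; eapply Rle_trans; [apply Rmax_r| apply Rmax_r]).
  assert (hLlam : L <= lam f g a b).
  { unfold L, lam. destruct (Rlt_dec (g a) (f a)); destruct (Rlt_dec (g b) (f b));
    unfold Rmax, Rabs; repeat destruct Rle_dec; repeat destruct Rcase_abs; lra. }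
  assert (hLx : forall x, a <= x <= b -> f x - g x <= L).
  { intros x hx. destruct (Req_dec x a) as [->|hxa]; [lra|].
    pose proof (hch a b x ltac:(lra) ltac:(lra) hab hx) as H.
    assert (0 <= (x - a) / (b - a) <= 1).
    { split. apply Rdiv_le_0_compat; lra.
      apply (Rmult_le_reg_r (b - a)); [lra|]. unfold Rdiv. rewrite Rmult_assoc, Rinv_l; lra. }
    nra. }
  assert (KEY : RInt (fun x => (f x - g x) ^ 2 * p x) a b <= L ^ 2 * P * (b - a)).
  { assert (ex1 : ex_RInt (fun x => (f x - g x) * p x) a b).
    { apply exR; auto. intros x. apply cmul; [apply hhc | apply hpc]. }
    assert (ex2 : ex_RInt (fun x => (f x - g x) ^ 2 * p x) a b).
    { apply exR; auto. intros x. apply cmul; [|apply hpc].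
      apply (continuous_ext (fun y => (f (cl a b y) - g (cl a b y)) * (f (cl a b y) - g (cl a b y)))).
      { intros; simpl; ring. }
      apply cmul; apply hhc. }
    destruct (Rle_dec 0 (f x0 - g x0)) as [hpos|hneg].
    -
      eapply Rle_trans.
      { apply (RInt_le _ (fun _ => L ^ 2 * P)); auto. apply ex_RInt_const.
        intros x hx. assert (hx' : a <= x <= b) by lra.
        pose proof (hmin x hx'). pose proof (hLx x hx'). pose proof (hp0 x hx'). pose proof (hP x hx').
        assert ((f x - g x) ^ 2 <= L ^ 2) by nra.
        assert (0 <= (f x - g x) ^ 2) by nra. fold P in H2. nra. }
      rewrite RInt_const. unfold scal; simpl; unfold mult; simpl. lra.
    - set (M := - (f x0 - g x0)).
      assert (hM : 0 < M) by (unfold M; lra).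
      assert (ex3 : ex_RInt (fun x => (f x - g x) * (f x - g x + M) * p x) a b).
      { apply exR; auto. intros x. apply cmul; [|apply hpc]. apply cmul; [apply hhc|].
        apply cplus; [apply hhc| apply continuous_const]. }
      assert (E : RInt (fun x => (f x - g x) ^ 2 * p x) a b =
                  RInt (fun x => (f x - g x) * (f x - g x + M) * p x) a b).
      { assert (Hs : RInt (fun x => (f x - g x) ^ 2 * p x + M * ((f x - g x) * p x)) a b =
           RInt (fun x => (f x - g x) ^ 2 * p x) a b + RInt (fun x => M * ((f x - g x) * p x)) a b)
          by exact (RInt_plus (fun x => (f x - g x) ^ 2 * p x) (fun x => scal M ((f x - g x) * p x)) a b ex2
          (ex_RInt_scal _ _ _ M ex1)).
        assert (Hs2 : RInt (fun x => M * ((f x - g x) * p x)) a b = M * RInt (fun x => (f x - g x) * p x) a b)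
          by exact (RInt_scal (fun x => (f x - g x) * p x) a b M ex1).
        rewrite horth in Hs2.
        transitivity (RInt (fun x => (f x - g x) ^ 2 * p x + M * ((f x - g x) * p x)) a b).
        { rewrite Hs, Hs2. rewrite Rmult_0_r, Rplus_0_r. reflexivity. }
        apply RInt_ext. intros x _.
        assert (Hr : forall u w : R, u ^ 2 * w + M * (u * w) = u * (u + M) * w) by (intros; ring).
        apply Hr. }
      rewrite E.
      assert (hge : forall x, a <= x <= b -> 0 <= f x - g x + M).
      { intros x hx. pose proof (hmin x hx). unfold M; lra. }
      assert (exl : ex_RInt (fun x => (f x - g x) * (f x - g x + M) * p x) a x0)
        by (apply (ex_RInt_Chasles_1 (V:=R_CompleteNormedModule) _ a x0 b); auto).
      assert (exr : ex_RInt (fun x => (f x - g x) * (f x - g x + M) * p x) x0 b)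
        by (apply (ex_RInt_Chasles_2 (V:=R_CompleteNormedModule) _ a x0 b); auto).
      rewrite <- (RInt_Chasles (V:=R_CompleteNormedModule) _ a x0 b exl exr).
      assert (RIGHT : RInt (fun x => (f x - g x) * (f x - g x + M) * p x) x0 b <= L ^ 2 * P * (b - x0)).
      { destruct (Rle_dec (f b - g b) 0) as [hbn|hbp].
        - eapply Rle_trans.
          { apply (piece _ x0 b b 0 0); auto; [lra| |].
            + intros x hx. apply neg; [| apply hge; lra | apply hp0; lra].
              pose proof (hch x0 b x hx0 ltac:(lra) ltac:(lra) ltac:(lra)) as H.
              set (t := (x - x0) / (b - x0)) in H.
              assert (0 <= t <= 1).
              { unfold t; split. apply Rdiv_le_0_compat; lra.
                apply (Rmult_le_reg_r (b - x0)); [lra|]. unfold Rdiv. rewrite Rmult_assoc, Rinv_l; lra. }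
              nra.
            + intros x hx; lra. }
          assert (0 <= L ^ 2 * P) by (apply Rmult_le_pos; nra). nra.
        - set (B := f b - g b) in *.
          assert (hx0b : x0 < b).
          { destruct (Req_dec x0 b) as [->|]; [|lra]. fold B in hneg. lra. }
          set (r := M / (B + M)).
          assert (hr : (B + M) * r = M) by (unfold r; field; lra).
          assert (hr0 : 0 < r < 1).
          { unfold r; split. apply Rdiv_lt_0_compat; lra.
            apply (Rmult_lt_reg_r (B + M)); [lra|]. unfold Rdiv. rewrite Rmult_assoc, Rinv_l; lra. }
          eapply Rle_trans.
          { apply (piece _ x0 (x0 + (b - x0) * r) b 0 (L * (L + M) * P)); auto.
            - split; nra.
            - intros x hx. apply neg; [| apply hge; nra | apply hp0; nra].
              pose proof (hch x0 b x hx0 ltac:(lra) ltac:(lra) ltac:(nra)) as H.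
              fold B in H.
              set (t := (x - x0) / (b - x0)) in H.
              assert (ht : t * (b - x0) = x - x0) by (unfold t; field; lra).
              assert (t < r) by nra.
              assert ((B + M) * t < M) by nra.
              unfold M in *. nra.
            - intros x hx. apply bnd; try lra.
              + apply hLx; nra.
              + apply hge; nra.
              + split; [apply hp0|apply hP]; nra. }
          replace (b - (x0 + (b - x0) * r)) with ((b - x0) * (B / (B + M))) by (unfold r; field; lra).
          pose proof (arith L M B P (b - x0) hL0 hM ltac:(lra) ltac:(lra) hP0 ltac:(lra)). lra. }
      assert (LEFT : RInt (fun x => (f x - g x) * (f x - g x + M) * p x) a x0 <= L ^ 2 * P * (x0 - a)).
      { destruct (Rle_dec (f a - g a) 0) as [han|hap].
        - eapply Rle_trans.
          { apply (piece _ a a x0 0 0); auto; [lra| |].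
            + intros x hx; lra.
            + intros x hx. apply neg; [| apply hge; lra | apply hp0; lra].
              pose proof (hch a x0 x ltac:(lra) hx0 ltac:(lra) ltac:(lra)) as H.
              set (t := (x - a) / (x0 - a)) in H.
              assert (0 <= t <= 1).
              { unfold t; split. apply Rdiv_le_0_compat; lra.
                apply (Rmult_le_reg_r (x0 - a)); [lra|]. unfold Rdiv. rewrite Rmult_assoc, Rinv_l; lra. }
              nra. }
          assert (0 <= L ^ 2 * P) by (apply Rmult_le_pos; nra). nra.
        - set (A := f a - g a) in *.
          assert (hax0 : a < x0).
          { destruct (Req_dec x0 a) as [->|]; [|lra]. fold A in hneg. lra. }
          set (r := A / (A + M)).
          assert (hr : (A + M) * r = A) by (unfold r; field; lra).
          assert (hr0 : 0 < r < 1).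
          { unfold r; split. apply Rdiv_lt_0_compat; lra.
            apply (Rmult_lt_reg_r (A + M)); [lra|]. unfold Rdiv. rewrite Rmult_assoc, Rinv_l; lra. }
          eapply Rle_trans.
          { apply (piece _ a (a + (x0 - a) * r) x0 (L * (L + M) * P) 0); auto.
            - split; nra.
            - intros x hx. apply bnd; try lra.
              + apply hLx; nra.
              + apply hge; nra.
              + split; [apply hp0|apply hP]; nra.
            - intros x hx. apply neg; [| apply hge; nra | apply hp0; nra].
              pose proof (hch a x0 x ltac:(lra) hx0 ltac:(lra) ltac:(nra)) as H.
              fold A in H.
              set (t := (x - a) / (x0 - a)) in H.
              assert (ht : t * (x0 - a) = x - a) by (unfold t; field; lra).
              assert (r < t) by nra.
              assert (A < (A + M) * t) by nra.
              unfold M in *. nra. }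
          replace (a + (x0 - a) * r - a) with ((x0 - a) * (A / (A + M))) by (unfold r; field; lra).
          pose proof (arith L M A P (x0 - a) hL0 hM ltac:(lra) ltac:(lra) hP0 ltac:(lra)). lra. }
      unfold plus; simpl. nra. }
  assert (0 <= P * (b - a)) by (apply Rmult_le_pos; lra).
  assert (L ^ 2 <= lam f g a b * (lam f g a b + F)) by nra.
  replace (lam f g a b * (lam f g a b + F) * P * (b - a)) with
    ((lam f g a b * (lam f g a b + F)) * (P * (b - a))) by ring.
  replace (L ^ 2 * P * (b - a)) with (L ^ 2 * (P * (b - a))) in KEY by ring.
  eapply Rle_trans; [exact KEY|]. apply Rmult_le_compat_r; auto.
Qed.
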